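(* Let $G$ be a finite simple graph without isolated vertices and let $d\ge 2$ be an integer. Then Dom has a winning strategy in the $(d:1)$-game played on $G$ (whichever player starts).
   Context: For a vertex $v$, $N[v]$ is its closed neighborhood. Colors are $p$ (purple) and $b$ (blue); $V_p,V_b$ denote the current sets of vertices of each color. A single coloring step (by either player, who may use either color) consists of choosing a vertex $v$ and a color $c$ such that (i) $v$ is uncolored and (ii) some $u\in N[v]$ satisfies $N[u]\cap V_c=\emptyset$ (evaluated just before this step); then $v$ gets color $c$. In the $(d:s)$-game, Dom and Sepy take turns; in each of his turns Dom sequentially performs exactly $d$ such coloring steps (or fewer only when fewer legal steps remain), and in each of his turns Sepy performs at most $s$ such steps (he may also pass). The game terminates as soon as either (s* ) some vertex $v$ has $N[v]\subseteq V_p$ or $N[v]\subseteq V_b$ — Sepy wins; or (d* ) both $V_p$ and $V_b$ are dominating sets of $G$ — Dom wins. *)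

(* Defs.v *)
From mathcomp Require Import all_boot.
Set Implicit Arguments. Unset Strict Implicit. Unset Printing Implicit Defensive.

(* A finite simple graph: vertex type T : finType, adjacency e : rel T
   (assumed symmetric and irreflexive in the theorem).
   A game state is the pair (V_p, V_b) of purple / blue vertex sets.
   Colours: true = purple (p), false = blue (b). *)

Definition state (T : finType) := ({set T} * {set T})%type.

Definition cnbhd (T : finType) (e : rel T) (v : T) : {set T} :=
  [set u | (u == v) || e v u].

Definition colorset (T : finType) (st : state T) (c : bool) : {set T} :=
  if c then st.1 else st.2.

Definition legal (T : finType) (e : rel T) (st : state T) (v : T) (c : bool) : bool :=
  [&& v \notin st.1, v \notin st.2 &
      [exists u in cnbhd e v, [disjoint cnbhd e u & colorset st c]]].

Definition color (T : finType) (st : state T) (v : T) (c : bool) : state T :=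
  if c then (v |: st.1, st.2) else (st.1, v |: st.2).

Definition dominating (T : finType) (e : rel T) (A : {set T}) : bool :=
  [forall v, ~~ [disjoint cnbhd e v & A]].

Definition sepy_won (T : finType) (e : rel T) (st : state T) : bool :=
  [exists v, (cnbhd e v \subset st.1) || (cnbhd e v \subset st.2)].

Definition dom_won (T : finType) (e : rel T) (st : state T) : bool :=
  dominating e st.1 && dominating e st.2.

Definition ended (T : finType) (e : rel T) (st : state T) : bool :=
  sepy_won e st || dom_won e st.

(* Positions from which Dom can force a win in the (d:s)-game.
   [domWinsD e d s k st]: it is Dom's turn, he still has to perform k steps.
   [domWinsS e d s k st]: it is Sepy's turn, he may still perform up to k steps
   (and may end his turn at any moment).
   Least fixed point = Dom forces termination with condition d-star. *)
Inductive domWinsD (T : finType) (e : rel T) (d s : nat) : nat -> state T -> Prop :=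
| DW_done k st : dom_won e st -> domWinsD e d s k st
| DW_step k st v c :
    ~~ ended e st -> legal e st v c ->
    domWinsD e d s k (color st v c) -> domWinsD e d s k.+1 st
| DW_end st : ~~ ended e st -> domWinsS e d s s st -> domWinsD e d s 0 st
| DW_stuck k st : ~~ ended e st -> (forall v c, ~~ legal e st v c) ->
    domWinsS e d s s st -> domWinsD e d s k st
with domWinsS (T : finType) (e : rel T) (d s : nat) : nat -> state T -> Prop :=
| SW_done k st : dom_won e st -> domWinsS e d s k st
| SW_play k st :
    ~~ ended e st ->
    domWinsD e d s d st ->                       (* Sepy ends his turn now *)
    (forall v c, 0 < k -> legal e st v c ->
       domWinsS e d s k.-1 (color st v c)) ->   (* Sepy makes one more step *)
    domWinsS e d s k st.

Definition init_state (T : finType) : state T := (set0, set0).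

Definition dom_wins_dom_first (T : finType) (e : rel T) (d s : nat) : Prop :=
  domWinsD e d s d (init_state T).
Definition dom_wins_sepy_first (T : finType) (e : rel T) (d s : nat) : Prop :=
  domWinsS e d s s (init_state T).

(* Main.v *)
Require Import Defs.
From mathcomp Require Import all_boot.
From Stdlib Require Import Classical.
Set Implicit Arguments. Unset Strict Implicit. Unset Printing Implicit Defensive.

Lemma disjP (T : finType) (A B : {set T}) :
  reflect (forall x, x \in A -> x \notin B) [disjoint A & B].
Proof.
rewrite disjoint_subset; apply: (iffP subsetP) => H x /H; rewrite inE //.
Qed.

Definition disj (T : finType) (st : state T) :=
  forall x c, x \in colorset st c -> x \notin colorset st (~~ c).
Definition uncol (T : finType) (st : state T) x := forall c, x \notin colorset st c.
Definition bad (T : finType) (e : rel T) (st : state T) v :=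
  exists c, v \in colorset st c /\ forall u, e v u -> u \notin colorset st (~~ c).
Definition Hc (T : finType) (e : rel T) (st : state T) v :=
  (forall u, e v u -> uncol st u) /\
  ((exists y1 y2, y1 <> y2 /\ e v y1 /\ e v y2) \/ (forall y z, e v y -> e y z -> z = v)).
Definition PD (T : finType) (e : rel T) (st : state T) k := disj st /\ ~~ sepy_won e st /\
   (forall w1 w2, bad e st w1 -> bad e st w2 -> w1 = w2) /\
   (k = 0 -> forall w, bad e st w -> Hc e st w).
Definition unc_set (T : finType) (st : state T) := [set x | (x \notin st.1) && (x \notin st.2)].

Section Basic.
Variables (T : finType) (e : rel T).
Implicit Types (st : state T).

Lemma in_col st v c c' x :
  (x \in colorset (color st v c) c') = ((c == c') && (x == v)) || (x \in colorset st c').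
Proof. by case: c; case: c'; rewrite /= ?in_setU1. Qed.

Lemma in_cnbhd v u : (u \in cnbhd e v) = (u == v) || e v u.
Proof. by rewrite /cnbhd inE. Qed.

Lemma legal_unc st v c : legal e st v c -> uncol st v.
Proof. by case/and3P => H1 H2 _ []. Qed.

Lemma legal_ex st v c : legal e st v c ->
  exists u, u \in cnbhd e v /\ [disjoint cnbhd e u & colorset st c].
Proof. by case/and3P => _ _ /exists_inP [u H1 H2]; exists u. Qed.

Lemma legalI st v c u : uncol st v -> u \in cnbhd e v ->
  (forall x, x \in cnbhd e u -> x \notin colorset st c) -> legal e st v c.
Proof.
move=> U Hu Hx; apply/and3P; split; [exact: (U true)|exact: (U false)|].
by apply/exists_inP; exists u => //; apply/disjP.
Qed.

Lemma uncol_or st x : ~ uncol st x -> exists c, x \in colorset st c.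
Proof.
move=> H; case E1: (x \in colorset st true); first by exists true.
case E2: (x \in colorset st false); first by exists false.
by exfalso; apply: H => -[]; rewrite ?E1 ?E2.
Qed.

Lemma disj_color st v c : disj st -> uncol st v -> disj (color st v c).
Proof.
move=> D U x c'; rewrite !in_col => /orP [/andP [/eqP <- /eqP ->]|H].
  by rewrite negb_or (U (~~ c)) andbT; case: c.
rewrite negb_or D // andbT; apply/negP => /andP [_ /eqP E].
by move: H; rewrite E (negPf (U c')).
Qed.

Lemma uncol_color st v c x : uncol st x -> x != v -> uncol (color st v c) x.
Proof. by move=> U ne c'; rewrite in_col (negPf ne) andbF (U c'). Qed.

Lemma unc_dec st v c : uncol st v -> #|unc_set (color st v c)| < #|unc_set st|.
Proof.
move=> U; apply: proper_card; apply/properP; split.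
  apply/subsetP => x; rewrite !inE.
  case: c; rewrite /= ?in_setU1 !negb_or.
    by case/andP => /andP [_ ->] ->.
  by case/andP => -> /andP [_ ->].
exists v; first by rewrite inE (U true) (U false).
by rewrite inE; case: c; rewrite /= in_setU1 eqxx /= ?andbF.
Qed.

Lemma bad_color st v c w : bad e (color st v c) w -> w = v \/ bad e st w.
Proof.
move=> [c' [Hw Hn]]; case: (eqVneq w v) => [->|ne]; [by left|right].
exists c'; split; first by move: Hw; rewrite in_col (negPf ne) andbF.
by move=> u /Hn; rewrite in_col negb_or => /andP [].
Qed.

Lemma good_nb st w u c : disj st -> e w u -> w \in colorset st c ->
  u \in colorset st (~~ c) -> ~ bad e st w.
Proof.
move=> D E Hw Hu [c0 [Hw0 Hn]].
case: (eqVneq c0 c) => [Ec|Nc].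
  by move: (Hn u E); rewrite Ec Hu.
have Ec : c0 = ~~ c by move: Nc; clear; case: c0; case: c.
by move: (D _ _ Hw); rewrite -Ec Hw0.
Qed.

Lemma mono_sepy st w c : cnbhd e w \subset colorset st c -> sepy_won e st.
Proof. by move=> H; apply/existsP; exists w; case: c H => /= ->; rewrite ?orbT. Qed.

Lemma sepy_mono st : sepy_won e st -> exists w c, cnbhd e w \subset colorset st c.
Proof. by case/existsP => w /orP [H|H]; [exists w, true|exists w, false]. Qed.

Lemma mono_bad st w c : disj st -> cnbhd e w \subset colorset st c ->
  [/\ bad e st w, w \in colorset st c & forall u, e w u -> u \in colorset st c].
Proof.
move=> D /subsetP H.
have Hw : w \in colorset st c by apply: H; rewrite in_cnbhd eqxx.
have Hn : forall u, e w u -> u \in colorset st c by move=> u E; apply: H; rewrite in_cnbhd E orbT.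
split => //; exists c; split => // u /Hn; exact: D.
Qed.

Lemma not_dom st : ~~ dom_won e st -> exists u c, [disjoint cnbhd e u & colorset st c].
Proof.
rewrite /dom_won negb_and => /orP [] /forallPn [u]; rewrite negbK => H.
  by exists u, true.
by exists u, false.
Qed.

End Basic.

Section Game.
Variables (T : finType) (e : rel T).
Hypotheses (e_sym : symmetric e) (e_irr : irreflexive e)
  (no_iso : forall v : T, exists u : T, e v u).
Variables (d : nat) (hd : 2 <= d).
Implicit Types (st : state T).

Lemma fix_move st w : disj st -> ~~ sepy_won e st -> bad e st w ->
  exists cw y, [/\ w \in colorset st cw, (forall u, e w u -> u \notin colorset st (~~cw)),
     e w y, uncol st y & legal e st y (~~ cw)].
Proof.
move=> D NS [cw [Hw Hn]].
have [y [Ey Uy]] : exists y, e w y /\ uncol st y.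
  apply: NNPP => Hno; move/negP: NS; apply; apply: (mono_sepy (w:=w) (c:=cw)).
  apply/subsetP => u; rewrite in_cnbhd => /orP [/eqP ->//|E].
  have NU : ~ uncol st u by move=> U; apply: Hno; exists u.
  have [c0 Hc0] := uncol_or NU.
  case: (eqVneq c0 cw) => [<-//|ne].
  have E0 : c0 = ~~ cw by move: ne; clear; case: c0; case: cw.
  by move: (Hn u E); rewrite -E0 Hc0.
exists cw, y; split => //.
apply: (legalI (u:=w)) => //; first by rewrite in_cnbhd e_sym Ey orbT.
move=> x; rewrite in_cnbhd => /orP [/eqP ->|/Hn //]; exact: D.
Qed.

Lemma illegal_leaf st x c w : w \in colorset st c -> e w x ->
  (forall z, e x z -> z = w) -> ~ legal e st x c.
Proof.
move=> Hw E Hx /legal_ex [u [Hu /disjP Hd]].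
move: Hu; rewrite in_cnbhd => /orP [/eqP Eu|/Hx Eu]; subst u.
  by move: (Hd w); rewrite in_cnbhd e_sym E orbT Hw => /(_ isT).
by move: (Hd w); rewrite in_cnbhd eqxx Hw => /(_ isT).
Qed.

Lemma no_sepy st : disj st -> (forall w, bad e st w -> forall u, e w u -> uncol st u) ->
  ~~ sepy_won e st.
Proof.
move=> D H; apply/negP => /sepy_mono [w [c Hm]].
have [B _ Hn] := mono_bad D Hm.
have [y Ey] := no_iso w.
by move: (H w B y Ey c); rewrite Hn.
Qed.

Lemma PD_after st z c0 k : disj st -> (forall w, ~ bad e st w) -> uncol st z ->
  (bad e (color st z c0) z -> Hc e (color st z c0) z) -> PD e (color st z c0) k.
Proof.
move=> D NB U HH.
have B1 : forall w, bad e (color st z c0) w -> w = z by move=> w /bad_color [//|/NB].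
split; first exact: disj_color.
split.
  apply: no_sepy; first exact: disj_color.
  by move=> w Bw; have E := B1 _ Bw; subst w; exact: (HH Bw).1.
split; first by move=> w1 w2 /B1 -> /B1 ->.
by move=> _ w Bw; have E := B1 _ Bw; subst w; exact: HH.
Qed.

Lemma D_step st k :
  (forall st', #|unc_set st'| < #|unc_set st| -> forall k, PD e st' k -> domWinsD e d 1 k st') ->
  0 < k -> PD e st k -> domWinsD e d 1 k st.
Proof.
move=> IH; case: k => // k _ [D [NS [U1 Hk]]].
case: (boolP (dom_won e st)) => [DW|NDW]; first exact: DW_done.
have NE : ~~ ended e st by rewrite /ended negb_or NS NDW.
have step : forall z c0, legal e st z c0 -> PD e (color st z c0) k -> domWinsD e d 1 k.+1 st.
  move=> z c0 L P; apply: (DW_step NE L); apply: (IH _ _ _ P); exact: unc_dec (legal_unc L).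
case: (classic (exists w, bad e st w)) => [[w Bw]|NB].
  have [cw [y [Hw Hn Ey Uy L]]] := fix_move D NS Bw.
  apply: (step _ _ L).
  set st' := color st y (~~ cw).
  have D' : disj st' by exact: disj_color.
  have NB' : forall z, ~ bad e st' z.
    move=> z Bz; have [Ez|Bz0] := bad_color Bz.
      subst z; apply: (good_nb (u:=w) (c:= ~~cw) D' _ _ _ Bz).
          by rewrite e_sym.
        by rewrite in_col !eqxx.
      by rewrite negbK in_col Hw orbT.
    have Ez := U1 _ _ Bz0 Bw; subst z.
    apply: (good_nb (u:=y) (c:=cw) D' Ey _ _ Bz); first by rewrite in_col Hw orbT.
    by rewrite in_col !eqxx.
  split => //; split; first by apply: no_sepy => // z /NB'.
  by split; [move=> w1 w2 /NB'|move=> _ z /NB'].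
have NB0 : forall w, ~ bad e st w by move=> w Bw; apply: NB; exists w.
have [u [c Hd]] := not_dom NDW.
move/disjP: Hd => Hd.
have Uu : uncol st u.
  move=> c0; apply/negP => Hu0.
  case: (eqVneq c0 c) => [E0|ne].
    by subst c0; move: (Hd u); rewrite in_cnbhd eqxx Hu0 => /(_ isT).
  have E0 : c0 = ~~ c by move: ne; clear; case: c0; case: c.
  subst c0; apply: (NB0 u); exists (~~c); split => // x Ex; rewrite negbK.
  by apply: Hd; rewrite in_cnbhd Ex orbT.
have Lu : legal e st u c by apply: (legalI (u:=u)) => //; rewrite in_cnbhd eqxx.
case: (classic (exists w, e u w /\ ~ uncol st w)) => [[w [Ew NUw]]|AU].
  have [c0 Hc0] := uncol_or NUw.
  have E0 : c0 = ~~ c.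
    case: (eqVneq c0 c) => [E|ne]; last by move: ne; clear; case: c0; case: c.
    by subst c0; move: (Hd w); rewrite in_cnbhd Ew orbT Hc0 => /(_ isT).
  subst c0.
  apply: (step _ _ Lu); apply: PD_after => // Bu; exfalso.
  apply: (good_nb (u:=w) (c:=c) (disj_color (c:=c) D Uu) Ew _ _ Bu); first by rewrite in_col !eqxx.
  by rewrite in_col Hc0 orbT.
have AU' : forall w, e u w -> uncol st w by move=> w Ew; apply: NNPP => NU; apply: AU; exists w.
case: (classic (exists y1 y2, y1 <> y2 /\ e u y1 /\ e u y2)) => [Two|NTwo].
  apply: (step _ _ Lu); apply: PD_after => // _; split; last by left.
  move=> w Ew; apply: uncol_color; first exact: AU'.
  by apply/eqP => E; subst w; rewrite e_irr in Ew.
have [y Ey] := no_iso u.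
have Only : forall w, e u w -> w = y.
  by move=> w Ew; apply: NNPP => ne; apply: NTwo; exists w, y; repeat split.
have Uy := AU' y Ey.
have yu : y != u by apply/eqP => E; subst y; rewrite e_irr in Ey.
case: (classic (exists w, e y w /\ ~ uncol st w)) => [[w [Ew NUw]]|AUy].
  have [c0 Hc0] := uncol_or NUw.
  have Ly : legal e st y (~~c0).
    apply: (legalI (u:=u)) => //; first by rewrite in_cnbhd e_sym Ey orbT.
    by move=> x; rewrite in_cnbhd => /orP [/eqP ->|/Only ->]; [exact: Uu|exact: Uy].
  apply: (step _ _ Ly); apply: PD_after => // By; exfalso.
  apply: (good_nb (u:=w) (c:= ~~c0) (disj_color (c:= ~~c0) D Uy) Ew _ _ By); first by rewrite in_col !eqxx.
  by rewrite negbK in_col Hc0 orbT.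
have AUy' : forall w, e y w -> uncol st w by move=> w Ew; apply: NNPP => NU; apply: AUy; exists w.
case: (classic (exists y1 y2, y1 <> y2 /\ e y y1 /\ e y y2)) => [Two|NTwo'].
  have Ly : legal e st y true.
    apply: (legalI (u:=y)) => //; first by rewrite in_cnbhd eqxx.
    by move=> x; rewrite in_cnbhd => /orP [/eqP ->|/AUy' //]; exact: Uy.
  apply: (step _ _ Ly); apply: PD_after => // _; split; last by left.
  move=> w Ew; apply: uncol_color; first exact: AUy'.
  by apply/eqP => E; subst w; rewrite e_irr in Ew.
have Lu' : legal e st u true.
  apply: (legalI (u:=u)) => //; first by rewrite in_cnbhd eqxx.
  by move=> x; rewrite in_cnbhd => /orP [/eqP ->|/Only ->]; [exact: Uu|exact: Uy].
apply: (step _ _ Lu'); apply: PD_after => // _; split.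
  by move=> w Ew; rewrite (Only _ Ew); apply: uncol_color.
right => y' z Ey' Eyz; rewrite (Only _ Ey') in Eyz.
apply: NNPP => ne; apply: NTwo'; exists z, u; repeat split => //.
by rewrite e_sym.
Qed.

Lemma S_step st :
  (forall st', #|unc_set st'| < #|unc_set st| -> forall k, PD e st' k -> domWinsD e d 1 k st') ->
  domWinsD e d 1 d st -> PD e st 0 -> domWinsS e d 1 1 st.
Proof.
move=> IH HD [D [NS [U1 Hk]]].
have H0 := Hk erefl.
have d0 : d <> 0 by move=> E; move: hd; rewrite E.
case: (boolP (dom_won e st)) => [DW|NDW]; first exact: SW_done.
apply: SW_play => //; first by rewrite /ended negb_or NS NDW.
move=> x c _ L.
have Ux := legal_unc L.
set st' := color st x c.
have D' : disj st' by exact: disj_color.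
have Hxc : x \in colorset st' c by rewrite in_col !eqxx.
have NS' : ~~ sepy_won e st'.
  apply/negP => /sepy_mono [w [c1 Hm]].
  have [Bw Hw Hn] := mono_bad D' Hm.
  case: (eqVneq w x) => [Ew|ne].
    subst w.
    have E1 : c1 = c.
      by move: Hw; rewrite in_col (negPf (Ux c1)) orbF eqxx andbT => /eqP.
    subst c1.
    have Hn0 : forall u, e x u -> u \in colorset st c.
      move=> u Eu; move: (Hn u Eu); rewrite in_col eqxx /=.
      have -> : (u == x) = false by apply/negP => /eqP E; subst u; rewrite e_irr in Eu.
      done.
    have [u [Hu /disjP Hd]] := legal_ex L.
    move: Hu; rewrite in_cnbhd => /orP [/eqP Eu|Eu].
      subst u; have [y Ey] := no_iso x.
      by move: (Hd y); rewrite in_cnbhd Ey orbT (Hn0 _ Ey) => /(_ isT).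
    by move: (Hd u); rewrite in_cnbhd eqxx (Hn0 _ Eu) => /(_ isT).
  have Bw0 : bad e st w by case: (bad_color Bw) => // E; move: ne; rewrite E eqxx.
  have [HU HT] := H0 _ Bw0.
  have Hw0 : w \in colorset st c1 by move: Hw; rewrite in_col (negPf ne) andbF.
  have Onlyx : forall u, e w u -> u = x /\ c = c1.
    move=> u Eu; move: (Hn u Eu); rewrite in_col (negPf (HU u Eu c1)) orbF.
    by case/andP => /eqP -> /eqP ->.
  have [y0 Ey0] := no_iso w.
  have [E0 Ec] := Onlyx _ Ey0; subst y0 c1.
  case: HT => [[y1 [y2 [ne12 [E1 E2]]]]|Leaf].
    by apply: ne12; rewrite (Onlyx _ E1).1 (Onlyx _ E2).1.
  by apply: (illegal_leaf Hw0 Ey0 _ L) => z Ez; apply: (Leaf x).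
case: (boolP (dom_won e st')) => [DW'|NDW']; first exact: SW_done.
have NE' : ~~ ended e st' by rewrite /ended negb_or NS' NDW'.
apply: SW_play => //.
case: (classic (forall w1 w2, bad e st' w1 -> bad e st' w2 -> w1 = w2)) => [U1'|NU].
  apply: IH; first exact: unc_dec Ux.
  by split => //; split => //; split => // /d0.
have [v [Bv [vx [Bv' Bx']]]] : exists v, bad e st v /\ v <> x /\ bad e st' v /\ bad e st' x.
  apply: NNPP => H; apply: NU => w1 w2 B1 B2; apply: NNPP => ne.
  case: (bad_color B1) => [E1|B10]; case: (bad_color B2) => [E2|B20].
  - by apply: ne; rewrite E1 E2.
  - subst w1; apply: H; exists w2; split; first done.
    by split; [move=> E; apply: ne; rewrite E|split].
  - subst w2; apply: H; exists w1; split; first done.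
    by split; [move=> E; apply: ne; rewrite E|split].
  - by apply: ne; apply: U1.
have [cw [y [Hx' Hnx Exy Uy Ly]]] := fix_move D' NS' Bx'.
have Ec : cw = c.
  case: (eqVneq cw c) => // ne; have E : cw = ~~ c by move: ne; clear; case: cw; case: c.
  by move: (D' _ _ Hxc); rewrite -E Hx'.
subst cw.
set st'' := color st' y (~~ c).
have D'' : disj st'' by exact: disj_color.
have Onlyv : forall z, bad e st'' z -> z = v.
  move=> z Bz; case: (bad_color Bz) => [Ez|Bz'].
    subst z; exfalso; apply: (good_nb (u:=x) (c:= ~~c) D'' _ _ _ Bz).
        by rewrite e_sym.
      by rewrite in_col !eqxx.
    by rewrite negbK in_col Hxc orbT.
  case: (bad_color Bz') => [Ez|Bz0]; last exact: U1.
  subst z; exfalso; apply: (good_nb (u:=y) (c:=c) D'' Exy _ _ Bz).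
    by rewrite in_col Hxc orbT.
  by rewrite in_col !eqxx.
have NS'' : ~~ sepy_won e st''.
  apply/negP => /sepy_mono [w [c1 Hm]].
  have [Bw Hw Hn] := mono_bad D'' Hm.
  have Ew := Onlyv _ Bw; subst w.
  have [HU HT] := H0 _ Bv.
  have [cv [Hv _]] := Bv.
  have vy : v != y.
    by apply/eqP => E; subst y; move: (Uy cv); rewrite in_col Hv orbT.
  have vx' : v != x by apply/eqP.
  have Hv1 : v \in colorset st c1 by move: Hw; rewrite !in_col (negPf vy) (negPf vx') !andbF.
  have Nb : forall u, e v u -> (u = y /\ c1 = ~~ c) \/ (u = x /\ c1 = c).
    move=> u Eu; move: (Hn u Eu); rewrite !in_col (negPf (HU u Eu c1)) orbF.
    case/orP => /andP [/eqP E1 /eqP E2]; [left|right]; by split.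
  case: HT => [[y1 [y2 [ne12 [E1 E2]]]]|Leaf].
    case: (Nb _ E1) => [[Y1 C1]|[Y1 C1]]; case: (Nb _ E2) => [[Y2 C2]|[Y2 C2]];
      subst y1 y2; (try by apply: ne12); by move: C2; rewrite C1; clear; case: c.
  have [n0 En0] := no_iso v.
  case: (Nb _ En0) => [[E0 _]|[E0 C1]]; subst n0.
    by apply: vx; symmetry; apply: (Leaf y x) => //; rewrite e_sym.
  subst c1; by apply: (illegal_leaf Hv1 En0 _ L) => z Ez; apply: (Leaf x).
rewrite -[X in domWinsD _ _ _ X](prednK (ltnW hd)).
apply: (DW_step NE' Ly); apply: IH.
  apply: ltn_trans (unc_dec c Ux); exact: unc_dec Uy.
split => //; split => //; split; first by move=> w1 w2 /Onlyv -> /Onlyv ->.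
by move=> E; move: hd; rewrite -(prednK (ltnW hd)) E.
Qed.

Lemma main st : (forall k, PD e st k -> domWinsD e d 1 k st) /\ (PD e st 0 -> domWinsS e d 1 1 st).
Proof.
have [n] : exists n, #|unc_set st| < n by exists #|unc_set st|.+1.
elim: n st => // n IHn st Hn.
have IH : forall st', #|unc_set st'| < #|unc_set st| -> forall k, PD e st' k -> domWinsD e d 1 k st'.
  by move=> st' H'; apply: (IHn st' (leq_trans H' Hn)).1.
have DS : forall k, 0 < k -> PD e st k -> domWinsD e d 1 k st by move=> k; exact: D_step.
have PDd : PD e st 0 -> PD e st d.
  by case=> [D [NS [U1 Hk]]]; split => //; split => //; split => // _; exact: Hk.
have SS : PD e st 0 -> domWinsS e d 1 1 st.
  move=> P; apply: S_step => //; apply: DS; [exact: ltnW | exact: PDd].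
split => // -[|k] P; last by apply: DS.
case: (boolP (dom_won e st)) => [DW|NDW]; first exact: DW_done.
apply: DW_end; first by case: P => _ [NS _]; rewrite /ended negb_or NS NDW.
exact: SS.
Qed.

End Game.

Theorem theorem10 (T : finType) (e : rel T)
  (e_sym : symmetric e) (e_irr : irreflexive e)
  (no_isolated : forall v : T, exists u : T, e v u)
  (d : nat) (hd : 2 <= d) :
  dom_wins_dom_first e d 1 /\ dom_wins_sepy_first e d 1.
Proof.
have P0 : forall k, PD e (init_state T) k.
  move=> k.
  have NB : forall w, ~ bad e (init_state T) w by move=> w [c [H _]]; move: H; case: c; rewrite /= inE.
  have D : disj (init_state T) by move=> x [] /=; rewrite inE.
  split => //; split.
    by apply: (no_sepy no_isolated) => // w /NB.
  by split; [move=> w1 w2 /NB|move=> _ w /NB].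
have [M1 M2] := main e_sym e_irr no_isolated hd (init_state T).
split; [exact: M1 | exact: M2].
Qed.
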